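(* Let $A$ be a finite abelian group of order $n$ and let $k\in\mathbb{N}$. Then there is a natural number $\alpha$ depending only on $n$ and $k$ such that for every $i\geq 1$, every morphism $\phi:\mathcal{D}_i(\mathbb{Z})\rightarrow\mathcal{D}_k(A)$ is $n^\alpha$-periodic, i.e. $\phi(x+n^\alpha)=\phi(x)$ for all $x\in\mathbb{Z}$.
   Context: A cube morphism $\{0,1\}^m\rightarrow\{0,1\}^l$ is a map extending to an affine homomorphism $\mathbb{Z}^m\rightarrow\mathbb{Z}^l$. For an abelian group $G$ and $k\in\mathbb{N}$, $\mathcal{D}_k(G)$ is $G$ with cube sets $C^m(\mathcal{D}_k(G))$ consisting of those $f:\{0,1\}^m\rightarrow G$ with $\sum_{v\in\{0,1\}^{k+1}}(-1)^{v_1+\dots+v_{k+1}}f(\psi(v))=0$ for every cube morphism $\psi:\{0,1\}^{k+1}\rightarrow\{0,1\}^m$. A morphism is a map $g$ such that $g\circ c$ is a cube of the target for every cube $c$ of the source. *)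

(* Defs.v *)
From HB Require Import structures.
From mathcomp Require Import all_boot all_order all_algebra.
Set Implicit Arguments. Unset Strict Implicit. Unset Printing Implicit Defensive.
Import Order.TTheory GRing.Theory Num.Theory.
Local Open Scope ring_scope.

Notation bcube m := {ffun 'I_m -> bool}.

(* A cube morphism {0,1}^m -> {0,1}^l: a map that extends to an affine
   homomorphism Z^m -> Z^l, i.e. v |-> b + M v for some b in Z^l and some
   integer l x m matrix M. *)
Definition cube_morphism (m l : nat) (psi : bcube m -> bcube l) : Prop :=
  exists (b : 'I_l -> int) (M : 'I_l -> 'I_m -> int),
    forall (v : bcube m) (j : 'I_l),
      ((nat_of_bool (psi v j))%:Z) = b j + \sum_(i < m) M j i * (nat_of_bool (v i))%:Z.

Definition is_cube (G : zmodType) (k m : nat) (f : bcube m -> G) : Prop :=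
  forall psi : bcube k.+1 -> bcube m, cube_morphism psi ->
    \sum_(v : bcube k.+1)
       (f (psi v)) *~ ((-1) ^+ (\sum_(i < k.+1) nat_of_bool (v i))%N) = 0.

Definition D_morphism (G H : zmodType) (i k : nat) (g : G -> H) : Prop :=
  forall (m : nat) (c : bcube m -> G), is_cube i c -> is_cube k (g \o c).

(* Main.v *)
Require Import Defs.
From HB Require Import structures.
From mathcomp Require Import all_boot all_order all_algebra.
From mathcomp Require fingroup cyclic.
Set Implicit Arguments. Unset Strict Implicit. Unset Printing Implicit Defensive.
Import Order.TTheory GRing.Theory Num.Theory.
Local Open Scope ring_scope.

Definition cnt d (v : bcube d) : nat := (\sum_(i < d) nat_of_bool (v i))%N.
Definition vcons d (b : bool) (w : bcube d) : bcube d.+1 :=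
  [ffun i => if unlift ord0 i is Some j then w j else b].

Arguments cnt {d}.
Arguments vcons {d}.

Lemma vcons0 d b (w : bcube d) : vcons b w ord0 = b.
Proof. by rewrite ffunE unlift_none. Qed.
Lemma vconsS d b (w : bcube d) j : vcons b w (lift ord0 j) = w j.
Proof. by rewrite ffunE liftK. Qed.

Lemma cnt_vcons d b (w : bcube d) : cnt (vcons b w) = (b + cnt w)%N.
Proof.
rewrite /cnt big_ord_recl vcons0; congr (_ + _)%N.
by apply: eq_bigr => j _; rewrite vconsS.
Qed.

Lemma sum_split (G : zmodType) d (F : bcube d.+1 -> G) :
  \sum_(v : bcube d.+1) F v = \sum_(w : bcube d) (F (vcons false w) + F (vcons true w)).
Proof.
rewrite (reindex (fun p : bool * bcube d => vcons p.1 p.2)); last first.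
  apply: onW_bij; exists (fun v : bcube d.+1 => (v ord0, [ffun j => v (lift ord0 j)])).
    by case=> b w /=; rewrite vcons0; congr pair; apply/ffunP => j; rewrite ffunE vconsS.
  move=> v /=; apply/ffunP => i; rewrite ffunE.
  by case: unliftP => [j ->|->]; rewrite ?ffunE.
rewrite -(pair_big xpredT xpredT (fun b w => F (vcons b w))) /= big_bool /=.
by rewrite addrC -big_split.
Qed.

Lemma E_split (G : zmodType) d (F : bcube d.+1 -> G) :
  \sum_(v : bcube d.+1) F v *~ ((-1) ^+ cnt v)
  = \sum_(w : bcube d) (F (vcons false w) - F (vcons true w)) *~ ((-1) ^+ cnt w).
Proof.
rewrite sum_split; apply: eq_bigr => w _.
by rewrite !cnt_vcons /= add0n add1n exprS mulN1r mulrNz mulrzBl.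
Qed.

Definition S (A : zmodType) d (f : int -> A) (x : int) : A :=
  \sum_(v : bcube d) f (x + (cnt v)%:Z) *~ ((-1) ^+ cnt v).
Definition Dif (A : zmodType) (f : int -> A) := fun x => f (x + 1) - f x.
Arguments S {A}.
Arguments Dif {A}.

Lemma S_succ (A : zmodType) d (f : int -> A) x : S d.+1 f x = - S d (Dif f) x.
Proof.
rewrite /S E_split -sumrN; apply: eq_bigr => w _.
rewrite !cnt_vcons /= add0n add1n /Dif -mulNrz opprB.
have -> : x + (cnt w).+1%:Z = x + (cnt w)%:Z + 1 by rewrite -addn1 PoszD addrA.
done.
Qed.

Lemma S0 (A : zmodType) (f : int -> A) x : S 0 f x = f x.
Proof.
rewrite /S (big_pred1 [ffun i => false]); last first.
  by move=> v /=; apply/esym/eqP/ffunP => -[].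
by rewrite /cnt big_ord0 addr0.
Qed.

Lemma const_int (A : zmodType) (h : int -> A) :
  (forall x, h (x + 1) = h x) -> forall x, h x = h 0.
Proof.
move=> H.
have Hm : forall x (m : nat), h (x + m%:Z) = h x.
  move=> x; elim=> [|m IH]; first by rewrite addr0.
  by rewrite -addn1 PoszD addrA H.
case=> m; first by rewrite -(Hm 0 m) add0r.
by rewrite -(Hm (Negz m) m.+1) NegzE addNr.
Qed.

Lemma swap4 (A : zmodType) (a b c d : A) : a - c = b - d -> a - b = c - d.
Proof.
move=> E; have -> : a = b - d + c by rewrite -E subrK.
by rewrite addrC !addrA addNr add0r addrC.
Qed.

Lemma period (A : zmodType) (n : nat) : (forall a : A, a *+ n = 0) ->
  forall d (f : int -> A), (forall x, S d f x = 0) ->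
  forall x, f (x + (n ^ d)%N%:Z) = f x.
Proof.
move=> nA; elim=> [|d IH] f Hf x.
  by rewrite -(S0 f) -(S0 f x) !Hf.
have HD : forall x, S d (Dif f) x = 0.
  by move=> y; apply/eqP; rewrite -oppr_eq0 -S_succ Hf.
have IHf := IH _ HD.
set P := (n ^ d)%N.
pose c y := f (y + P%:Z) - f y.
have cc : forall y, c y = c 0.
  apply: const_int => y; rewrite /c /P.
  have E := IHf y; rewrite /Dif in E.
  rewrite (addrAC y 1); exact: swap4 E.
have Hm : forall m : nat, f (x + (P * m)%N%:Z) = f x + c 0 *+ m.
  elim=> [|m IHm]; first by rewrite muln0 addr0 mulr0n addr0.
  rewrite mulnS addnC PoszD addrA mulrSr addrA -IHm -(cc (x + (P * m)%N%:Z)) /c.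
  by rewrite addrCA subrr addr0.
by rewrite expnSr Hm nA addr0.
Qed.

Lemma lin_vcons d (N : 'I_d.+1 -> int) b (w : bcube d) :
  \sum_l N l * (nat_of_bool (vcons b w l))%:Z
  = N ord0 * (nat_of_bool b)%:Z + \sum_j N (lift ord0 j) * (nat_of_bool (w j))%:Z.
Proof.
rewrite big_ord_recl vcons0; congr (_ + _).
by apply: eq_bigr => j _; rewrite vconsS.
Qed.

Lemma affine_null e (C : int) (N : 'I_e.+2 -> int) :
  \sum_(v : bcube e.+2) (C + \sum_l N l * (nat_of_bool (v l))%:Z) *~ ((-1) ^+ cnt v) = 0.
Proof.
rewrite E_split.
have H : forall w : bcube e.+1,
   (C + \sum_l N l * (nat_of_bool (vcons false w l))%:Z) -
   (C + \sum_l N l * (nat_of_bool (vcons true w l))%:Z) = - N ord0.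
  move=> w; rewrite !lin_vcons /= mulr0 mulr1 add0r.
  by rewrite opprD addrACA subrr add0r opprD addrCA subrr addr0.
under eq_bigr => w _ do rewrite H.
rewrite E_split big1 // => u _.
by rewrite subrr mul0rz.
Qed.

Lemma mainTheorem7 (n k : nat) :
  exists alpha : nat,
    forall (A : finZmodType), #|A| = n ->
    forall (i : nat), (1 <= i)%N ->
    forall (phi : int -> A), D_morphism i k phi ->
    forall x : int, phi (x + ((n ^ alpha)%N)%:Z) = phi x.
Proof.
exists k.+1 => A cardA [//|e] _ phi Hphi x.
have nA : forall a : A, a *+ n = 0.
  move=> a; rewrite -cardA -FinRing.zmodXgE -cardsT.
  exact: (@cyclic.expg_cardG (FinRing.Zmodule_to_finGroup A) (fingroup.setT_group _) a (in_setT _)).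
apply: (period nA) => y.
pose c := fun v : bcube k.+1 => y + (cnt v)%:Z.
have Hc : is_cube e.+1 c.
  move=> psi [b [M HM]].
  rewrite -[RHS](affine_null (y + \sum_j b j) (fun l => \sum_j M j l)).
  apply: eq_bigr => v _; congr (_ *~ _).
  rewrite /c /cnt (big_morph Posz PoszD (erefl 0%:Z)) -addrA; congr (_ + _).
  rewrite (eq_bigr _ (fun j _ => HM v j)) big_split /=; congr (_ + _).
  rewrite exchange_big /=; apply: eq_bigr => l _.
  by rewrite mulr_suml.
have := Hphi _ c Hc id.
have idm : cube_morphism (@id (bcube k.+1)).
  exists (fun _ => 0), (fun j i => (j == i)%:R) => v j.
  rewrite add0r (bigD1 j) //= eqxx mul1r big1 ?addr0 // => i /negbTE.
  by rewrite eq_sym => ->; rewrite mul0r.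
by move/(_ idm).
Qed.
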